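(* Let $f(z)=e^z$, let $z_0\in\mathbb{C}$ satisfy $f^n(z_0)\to\infty$, set $z_n=f^n(z_0)$ and $D_n=D_{2\pi}(z_n)$ for $n\geq1$. Then there exist $n_0\in\mathbb{N}$ and holomorphic maps $\phi_n\colon D_n\to\mathbb{C}$, $n\geq n_0$, such that: (a) $\phi_n(z_n)=z_0$; (b) $f^n(\phi_n(z))=z$ for all $z\in D_n$; (c) $\sup_{z\in D_n}|\phi_n'(z)|\to0$ as $n\to\infty$; (d) $\mathrm{diam}(\phi_n(D_n))\to0$ as $n\to\infty$.
   Context: $D_r(w)$ denotes the open Euclidean disc of radius $r$ centred at $w$; $f^n$ is the $n$-th iterate. *)

(* Defs.v *)
From Stdlib Require Import Reals.
Open Scope R_scope.

Definition Cplx : Type := (R * R)%type.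

Definition Cadd (z w : Cplx) : Cplx := (fst z + fst w, snd z + snd w).
Definition Csub (z w : Cplx) : Cplx := (fst z - fst w, snd z - snd w).
Definition Cmul (z w : Cplx) : Cplx :=
  (fst z * fst w - snd z * snd w, fst z * snd w + snd z * fst w).
Definition Cmod (z : Cplx) : R := sqrt (fst z ^ 2 + snd z ^ 2).

Definition Cexp (z : Cplx) : Cplx := (exp (fst z) * cos (snd z), exp (fst z) * sin (snd z)).

Definition iter (n : nat) (f : Cplx -> Cplx) (z : Cplx) : Cplx := Nat.iter n f z.

Definition in_disc (r : R) (w z : Cplx) : Prop := Cmod (Csub z w) < r.

Definition cderiv_at (f : Cplx -> Cplx) (z d : Cplx) : Prop :=
  forall eps, 0 < eps -> exists delta, 0 < delta /\
    forall h, 0 < Cmod h < delta ->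
      Cmod (Csub (Csub (f (Cadd z h)) (f z)) (Cmul h d)) <= eps * Cmod h.

Definition escapes (f : Cplx -> Cplx) (z0 : Cplx) : Prop :=
  forall M, exists N, forall n, (N <= n)%nat -> M < Cmod (iter n f z0).

(* Main.v *)
Require Import Defs.
From Stdlib Require Import Reals Lra Lia.
From Coquelicot Require Complex.
Open Scope R_scope.

Lemma abs_btw a b : Rabs a <= b -> -b <= a <= b.
Proof. unfold Rabs; destruct (Rcase_abs a); lra. Qed.

Lemma sin_ap1 a: sin_approx a 1 = a - a^3/6.
Proof. unfold sin_approx, sin_term. simpl. field. Qed.
Lemma sin_ap2 a: sin_approx a 2 = a - a^3/6 + a^5/120.
Proof. unfold sin_approx, sin_term. simpl. field. Qed.
Lemma cos_lbE a: cos_lb a = 1 - a^2/2 + a^4/24 - a^6/720.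
Proof. unfold cos_lb, cos_approx, cos_term. simpl. field. Qed.

Lemma sin_pos_bnd a : 0 <= a <= 1 -> a - a^3/6 <= sin a <= a.
Proof.
  intros Ha. destruct (pre_sin_bound a 0 ltac:(lra) ltac:(lra)) as [H1 H2].
  simpl in H1, H2. rewrite sin_ap1 in H1. rewrite sin_ap2 in H2. split; [lra|].
  assert (a^5 <= a^3). { replace (a^5) with (a^3*(a*a)) by ring.
    assert (0 <= a^3) by (apply pow_le; lra). assert (a*a <= 1) by nra. nra. }
  lra.
Qed.

Lemma sin_bnd y : Rabs y <= 1 -> Rabs (sin y - y) <= y^2 /\ Rabs (sin y) <= Rabs y.
Proof.
  intros Hy. destruct (Rle_lt_dec 0 y) as [Hp|Hn].
  - rewrite Rabs_right in Hy by lra. destruct (sin_pos_bnd y ltac:(lra)).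
    assert (y^3/6 <= y^2) by (simpl; nra).
    assert (0 <= sin y) by (simpl in *; nra).
    split; [apply Rabs_le; lra| rewrite !Rabs_right; lra].
  - rewrite Rabs_left in Hy by lra. destruct (sin_pos_bnd (-y) ltac:(lra)).
    rewrite sin_neg in *.
    assert ((-y)^3/6 <= y^2) by (simpl; nra).
    assert (0 <= - sin y) by (simpl in *; nra).
    split; [apply Rabs_le; lra| rewrite !Rabs_left1; lra].
Qed.

Lemma cos_bnd y : Rabs y <= 1 -> Rabs (cos y - 1) <= y^2/2.
Proof.
  intros Hy. assert (3 < PI) by (generalize PI2_3_2; lra).
  apply abs_btw in Hy.
  destruct (COS y ltac:(lra) ltac:(lra)) as [H1 _]. rewrite cos_lbE in H1.
  assert (y^6 <= y^4). { replace (y^6) with (y^4*(y*y)) by ring.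
    assert (0 <= y^4) by (replace (y^4) with ((y*y)*(y*y)) by ring; nra). assert (y*y <= 1) by nra. nra. }
  assert (0 <= y^4) by (replace (y^4) with ((y*y)*(y*y)) by ring; nra).
  assert (cos y <= 1) by (apply COS_bound).
  apply Rabs_le. lra.
Qed.

Lemma exp_bnd x : Rabs x <= 1/2 -> 0 <= exp x - 1 - x <= 2 * x^2 /\ exp x <= 2.
Proof.
  intros Hx. apply abs_btw in Hx.
  assert (H1 := exp_ineq1_le x). assert (H2 := exp_ineq1_le (-x)).
  assert (Hp := exp_pos x).
  assert (exp x * exp (-x) = 1) by (rewrite <- exp_plus; replace (x + -x) with 0 by ring; apply exp_0).
  assert (exp x * (1 - x) <= 1) by nra.
  split; [split|]; try lra.
  - assert (exp x <= 1/(1-x)) by (apply (Rmult_le_reg_r (1-x)); [lra|]; field_simplify; lra).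
    assert (1/(1-x) - 1 - x <= 2*x^2). { 
      apply (Rmult_le_reg_r (1-x)); [lra|]. field_simplify; [|lra]. simpl. nra. }
    lra.
  - nra.
Qed.

Lemma Cmod_nonneg z : 0 <= Cmod z.
Proof. apply sqrt_pos. Qed.
Lemma Cmod_sq z : Cmod z ^ 2 = fst z ^ 2 + snd z ^ 2.
Proof. unfold Cmod. apply pow2_sqrt. nra. Qed.
Lemma abs_fst_le z : Rabs (fst z) <= Cmod z.
Proof. generalize (Complex.Rmax_Cmod z). unfold Cmod, Complex.Cmod. intros H.
  eapply Rle_trans; [apply Rmax_l|exact H]. Qed.
Lemma abs_snd_le z : Rabs (snd z) <= Cmod z.
Proof. generalize (Complex.Rmax_Cmod z). unfold Cmod, Complex.Cmod. intros H.
  eapply Rle_trans; [apply Rmax_r|exact H]. Qed.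
Lemma Cmod_le_sum z : Cmod z <= Rabs (fst z) + Rabs (snd z).
Proof.
  unfold Cmod. rewrite <- (sqrt_pow2 (Rabs (fst z) + Rabs (snd z))) by
    (generalize (Rabs_pos (fst z)) (Rabs_pos (snd z)); lra).
  apply sqrt_le_1_alt. rewrite <- (pow2_abs (fst z)), <- (pow2_abs (snd z)).
  generalize (Rabs_pos (fst z)) (Rabs_pos (snd z)); nra.
Qed.
Lemma Cmod_tri a b : Cmod (Cadd a b) <= Cmod a + Cmod b.
Proof. exact (Complex.Cmod_triangle a b). Qed.
Lemma Cmod_mul a b : Cmod (Cmul a b) = Cmod a * Cmod b.
Proof. exact (Complex.Cmod_mult a b). Qed.
Lemma Csub_Cadd a b : Csub a b = Cadd a (Cmul (-1, 0) b).
Proof. destruct a, b; unfold Csub, Cadd, Cmul; simpl; f_equal; ring. Qed.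
Lemma Cmod_m1 b : Cmod (Cmul (-1,0) b) = Cmod b.
Proof. rewrite Cmod_mul. replace (Cmod (-1,0)) with 1. ring.
  unfold Cmod; simpl. replace (-1 * (-1*1) + 0*(0*1)) with 1 by ring. symmetry; apply sqrt_1. Qed.
Lemma Cmod_sub_tri a b : Cmod (Csub a b) <= Cmod a + Cmod b.
Proof. rewrite Csub_Cadd. eapply Rle_trans; [apply Cmod_tri|]. rewrite Cmod_m1. lra. Qed.
Lemma Cmod_sub_sym a b : Cmod (Csub a b) = Cmod (Csub b a).
Proof. unfold Cmod, Csub; simpl. f_equal. ring. Qed.
Lemma Cmod_tri3 a b c : Cmod (Csub a c) <= Cmod (Csub a b) + Cmod (Csub b c).
Proof. replace (Csub a c) with (Cadd (Csub a b) (Csub b c)) by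
  (destruct a, b, c; unfold Csub, Cadd; simpl; f_equal; ring). apply Cmod_tri. Qed.
Lemma Cmod_rev a b : Cmod a - Cmod b <= Cmod (Csub a b).
Proof. replace a with (Cadd (Csub a b) b) at 1 by (destruct a,b; unfold Csub,Cadd; simpl; f_equal; ring).
  generalize (Cmod_tri (Csub a b) b). lra. Qed.

Lemma Cexp_add a b : Cexp (Cadd a b) = Cmul (Cexp a) (Cexp b).
Proof. destruct a as [x y], b as [u v]; unfold Cexp, Cadd, Cmul; simpl.
  rewrite exp_plus, cos_plus, sin_plus. f_equal; ring. Qed.
Lemma Cmod_Cexp a : Cmod (Cexp a) = exp (fst a).
Proof. unfold Cmod, Cexp; simpl.
  replace (exp (fst a) * cos (snd a) * (exp (fst a) * cos (snd a) * 1) +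
   exp (fst a) * sin (snd a) * (exp (fst a) * sin (snd a) * 1)) with
   (exp (fst a) * exp (fst a) * ((sin (snd a))² + (cos (snd a))²)) by (unfold Rsqr; ring).
  rewrite sin2_cos2, Rmult_1_r. apply sqrt_square. generalize (exp_pos (fst a)); lra. Qed.

Lemma Cexp_quad k : Cmod k <= 1/2 ->
  Cmod (Csub (Csub (Cexp k) (1,0)) k) <= 4 * Cmod k ^ 2.
Proof.
  intros Hk. destruct k as [x y].
  assert (Hx := abs_fst_le (x,y)). assert (Hy := abs_snd_le (x,y)).
  assert (Hs := Cmod_sq (x,y)). simpl in Hx, Hy, Hs.
  eapply Rle_trans; [apply Cmod_le_sum|]. unfold Cexp, Csub; simpl.
  destruct (exp_bnd x ltac:(lra)) as [[E1 E2] E3].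
  destruct (sin_bnd y ltac:(lra)) as [S1 S2].
  assert (C1 := cos_bnd y ltac:(lra)).
  assert (Ep := exp_pos x).
  assert (A1 : Rabs (exp x * cos y - 1 - x) <= 2 * (x^2+y^2)).
  { replace (exp x * cos y - 1 - x) with (exp x * (cos y - 1) + (exp x - 1 - x)) by ring.
    eapply Rle_trans; [apply Rabs_triang|]. rewrite Rabs_mult, (Rabs_right (exp x)) by lra.
    rewrite (Rabs_right (exp x - 1 - x)) by lra.
    assert (exp x * Rabs (cos y - 1) <= 2 * (y^2/2)).
    { apply Rmult_le_compat; try lra; apply Rabs_pos. }
    assert (0 <= x^2) by apply pow2_ge_0. assert (0 <= y^2) by apply pow2_ge_0. lra. }
  assert (A2 : Rabs (exp x * sin y - 0 - y) <= 2 * (x^2+y^2)).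
  { replace (exp x * sin y - 0 - y) with ((exp x - 1) * sin y + (sin y - y)) by ring.
    eapply Rle_trans; [apply Rabs_triang|]. rewrite Rabs_mult.
    assert (Rabs (exp x - 1) <= 2 * Rabs x).
    { assert (Hx2 : Rabs x <= 1/2) by lra. apply abs_btw in Hx2. assert (x^2 = x*x) by ring.
      destruct (Rle_lt_dec 0 x).
      - rewrite (Rabs_right x) by lra. apply Rabs_le. nra.
      - rewrite (Rabs_left x) by lra. apply Rabs_le. nra. }
    assert (Rabs (exp x - 1) * Rabs (sin y) <= 2 * Rabs x * Rabs y).
    { apply Rmult_le_compat; try apply Rabs_pos; lra. }
    assert (2 * Rabs x * Rabs y <= x^2 + y^2).
    { rewrite <- (pow2_abs x), <- (pow2_abs y). assert (0 <= (Rabs x - Rabs y)^2) by apply pow2_ge_0.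
      simpl in *. lra. }
    assert (0 <= x^2) by apply pow2_ge_0. assert (0 <= y^2) by apply pow2_ge_0. lra. }
  lra.
Qed.

Definition Cinv (z : Cplx) : Cplx :=
  (fst z / (fst z ^ 2 + snd z ^ 2), - snd z / (fst z ^ 2 + snd z ^ 2)).

Lemma Cmod_pos_sq z : 0 < Cmod z -> fst z ^ 2 + snd z ^ 2 <> 0.
Proof. intros H. rewrite <- Cmod_sq. apply pow_nonzero. lra. Qed.

Lemma Cmul_Cinv z : 0 < Cmod z -> Cmul z (Cinv z) = (1, 0).
Proof. intros H. apply Cmod_pos_sq in H. destruct z as [a b]. simpl in *.
  unfold Cmul, Cinv; simpl. f_equal; field; simpl in H; lra. Qed.

Lemma Cmod_10 : Cmod (1,0) = 1.
Proof. unfold Cmod; simpl. replace (1*(1*1)+0*(0*1)) with 1 by ring. apply sqrt_1. Qed.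

Lemma Cmod_Cinv z : 0 < Cmod z -> Cmod (Cinv z) = / Cmod z.
Proof. intros H. assert (E : Cmod z * Cmod (Cinv z) = 1).
  { rewrite <- Cmod_mul, Cmul_Cinv, Cmod_10 by lra. reflexivity. }
  apply (Rmult_eq_reg_l (Cmod z)); [|lra]. rewrite E. field. lra. Qed.

Definition Log (u : Cplx) : Cplx := (ln (Cmod u), atan (snd u / fst u)).

Lemma Cexp_Log u : 0 < fst u -> Cexp (Log u) = u.
Proof.
  intros H. destruct u as [x y]. simpl in H. unfold Cexp, Log; simpl.
  assert (Hm : Cmod (x,y) = x * sqrt (1 + (y/x)²)).
  { unfold Cmod; simpl. transitivity (sqrt (x*x) * sqrt (1 + (y/x)²)).
    - rewrite <- sqrt_mult_alt by nra. f_equal. unfold Rsqr. field. lra.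
    - rewrite sqrt_square by lra. reflexivity. }
  assert (Hs : 0 < sqrt (1 + (y/x)²)). { apply sqrt_lt_R0. generalize (Rle_0_sqr (y/x)). lra. }
  assert (Hc : 0 < Cmod (x,y)) by (rewrite Hm; nra).
  rewrite exp_ln by lra. rewrite cos_atan, sin_atan, Hm. f_equal; field; lra.
Qed.

Lemma Log_1 : Log (1,0) = (0,0).
Proof. unfold Log. rewrite Cmod_10, ln_1. simpl. replace (0/1) with 0 by field. rewrite atan_0. reflexivity. Qed.

Lemma ln_le_xm1 x : 0 < x -> ln x <= x - 1.
Proof. intros H. rewrite <- (ln_exp (x-1)).
  destruct (Rle_lt_or_eq_dec x (exp (x-1))) as [h|h].
  - generalize (exp_ineq1_le (x-1)); lra.
  - apply Rlt_le, ln_increasing; lra.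
  - rewrite <- h; lra. Qed.

Lemma atan_small s : Rabs s <= 1/39 -> Rabs (atan s) < 1/32.
Proof.
  intros Hs. apply abs_btw in Hs.
  assert (3 < PI) by (generalize PI2_3_2; lra).
  destruct (sin_pos_bnd (1/32) ltac:(lra)) as [S1 _].
  assert (Hc : 0 < cos (1/32)) by (apply cos_gt_0; lra).
  assert (Hc1 : cos (1/32) <= 1) by apply COS_bound.
  assert (T : 1/39 < tan (1/32)).
  { unfold tan. apply (Rmult_lt_reg_r (cos (1/32))); [lra|]. field_simplify; [|lra]. simpl in S1. nra. }
  assert (A : atan (tan (1/32)) = 1/32) by (apply atan_tan; lra).
  assert (atan s < 1/32) by (rewrite <- A; apply atan_increasing; lra).
  assert (atan (-s) < 1/32) by (rewrite <- A; apply atan_increasing; lra).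
  rewrite atan_opp in *. apply Rabs_def1; lra.
Qed.

Lemma Log_small u : Cmod (Csub u (1,0)) < 1/40 -> 0 < fst u /\ Cmod (Log u) <= 1/16 /\ 0 < Cmod u.
Proof.
  intros H. assert (H1 := abs_fst_le (Csub u (1,0))). assert (H2 := abs_snd_le (Csub u (1,0))).
  destruct u as [x y]. unfold Csub in *; simpl in *.
  assert (Hx : Rabs (x - 1) <= 1/40) by lra. assert (Hy : Rabs (y - 0) <= 1/40) by lra.
  apply abs_btw in Hx, Hy.
  assert (R1 := Cmod_rev (x,y) (1,0)). assert (R2 := Cmod_rev (1,0) (x,y)).
  rewrite Cmod_sub_sym in R2. unfold Csub in R1, R2; simpl in R1, R2. rewrite Cmod_10 in R1, R2.
  assert (Hm1 : 39/40 < Cmod (x,y)) by lra. assert (Hm2 : Cmod (x,y) < 41/40) by lra.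
  split; [lra|]. split; [|lra].
  eapply Rle_trans; [apply Cmod_le_sum|]. unfold Log; simpl.
  assert (L1 : Rabs (ln (Cmod (x,y))) <= 1/39).
  { apply Rabs_le. split.
    - assert (ln (/ Cmod (x,y)) <= / Cmod (x,y) - 1) by (apply ln_le_xm1; apply Rinv_0_lt_compat; lra).
      rewrite ln_Rinv in H0 by lra.
      assert (/ Cmod (x,y) < 40/39). { apply (Rmult_lt_reg_r (Cmod (x,y))); [lra|]. rewrite Rinv_l by lra. lra. }
      lra.
    - generalize (ln_le_xm1 (Cmod (x,y)) ltac:(lra)). lra. }
  assert (L2 : Rabs (atan (y / x)) < 1/32).
  { apply atan_small. unfold Rdiv. rewrite Rabs_mult, Rabs_inv, (Rabs_right x) by lra.
    apply (Rmult_le_reg_r x); [lra|]. rewrite Rmult_assoc, Rinv_l by lra.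
    assert (Rabs y <= 1/40) by (apply Rabs_le; lra). lra. }
  lra.
Qed.

Lemma Cexp_lower d : Cmod d <= 1/8 -> Cmod d / 2 <= Cmod (Csub (Cexp d) (1,0)).
Proof.
  intros H. assert (Q := Cexp_quad d ltac:(lra)).
  assert (T := Cmod_rev d (Csub (Csub (Cexp d) (1,0)) d)).
  replace (Csub d (Csub (Csub (Cexp d) (1, 0)) d)) with (Cmul (-1,0) (Csub (Csub (Cexp d) (1,0)) (Cadd d d)))
    in T by (destruct d; unfold Csub, Cmul, Cadd, Cexp; simpl; f_equal; ring).
  assert (T2 := Cmod_rev (Csub (Cexp d) (1,0)) d).
  replace (Csub (Csub (Cexp d) (1, 0)) d) with (Csub (Csub (Cexp d) (1, 0)) d) in T2 by reflexivity.
  assert (0 <= Cmod d) by apply Cmod_nonneg.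
  assert (Cmod d ^ 2 <= Cmod d / 8) by (simpl; nra).
  assert (T3 := Cmod_tri3 d (Csub (Cexp d) (1,0)) (0,0)).
  assert (E1 : Csub d (0,0) = d) by (destruct d; unfold Csub; simpl; f_equal; ring).
  assert (E2 : Csub (Csub (Cexp d) (1,0)) (0,0) = Csub (Cexp d) (1,0)) by (unfold Csub; simpl; f_equal; ring).
  rewrite E1, E2 in T3.
  rewrite Cmod_sub_sym in T3. lra.
Qed.

Lemma Log_lip u v : Cmod (Csub u (1,0)) < 1/40 -> Cmod (Csub v (1,0)) < 1/40 ->
  Cmod (Csub (Log u) (Log v)) <= 2 * Cmod (Csub u v) / Cmod v.
Proof.
  intros Hu Hv. destruct (Log_small u Hu) as [U1 [U2 U3]]. destruct (Log_small v Hv) as [V1 [V2 V3]].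
  set (d := Csub (Log u) (Log v)).
  assert (Hd : Cmod d <= 1/8) by (generalize (Cmod_sub_tri (Log u) (Log v)); unfold d; lra).
  assert (Eu : u = Cmul v (Cexp d)).
  { rewrite <- (Cexp_Log v V1) at 1. rewrite <- Cexp_add. rewrite <- (Cexp_Log u U1) at 1.
    f_equal. unfold d. destruct (Log u), (Log v). unfold Cadd, Csub; simpl; f_equal; ring. }
  assert (Es : Csub u v = Cmul v (Csub (Cexp d) (1,0))).
  { rewrite Eu. destruct v, (Cexp d). unfold Csub, Cmul; simpl; f_equal; ring. }
  rewrite Es, Cmod_mul. assert (L := Cexp_lower d Hd).
  apply (Rmult_le_reg_r (Cmod v)); [lra|]. field_simplify; [|lra].
  assert (0 <= Cmod d) by apply Cmod_nonneg. nra.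
Qed.

Lemma Cmod_zero_eq z : Cmod z = 0 -> z = (0,0).
Proof. intros H. assert (H2 := Cmod_sq z). rewrite H in H2. destruct z as [a b]; simpl in *.
  assert (a = 0) by nra. assert (b = 0) by nra. subst; reflexivity. Qed.

Lemma Cexp_deriv a : cderiv_at Cexp a (Cexp a).
Proof.
  intros eps Heps. set (c := Cmod (Cexp a)).
  assert (Hc : 0 < c) by (unfold c; rewrite Cmod_Cexp; apply exp_pos).
  exists (Rmin (1/2) (eps / (4 * c))). split.
  { apply Rmin_pos; [lra|]. apply Rdiv_lt_0_compat; lra. }
  intros h [H1 H2].
  assert (E : Csub (Csub (Cexp (Cadd a h)) (Cexp a)) (Cmul h (Cexp a)) =
              Cmul (Cexp a) (Csub (Csub (Cexp h) (1,0)) h)).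
  { rewrite Cexp_add. destruct (Cexp a), (Cexp h), h. unfold Csub, Cmul; simpl; f_equal; ring. }
  rewrite E, Cmod_mul. fold c.
  assert (Hh1 : Cmod h <= 1/2) by (generalize (Rmin_l (1/2) (eps/(4*c))); lra).
  assert (Hh2 : Cmod h <= eps/(4*c)) by (generalize (Rmin_r (1/2) (eps/(4*c))); lra).
  assert (Q := Cexp_quad h Hh1).
  assert (c * (4 * Cmod h ^ 2) <= eps * Cmod h).
  { simpl. replace (c * (4 * (Cmod h * (Cmod h * 1)))) with ((4*c*Cmod h) * Cmod h) by ring.
    apply Rmult_le_compat_r; [lra|].
    apply (Rmult_le_reg_r (/(4*c))). apply Rinv_0_lt_compat; lra.
    replace (4 * c * Cmod h * / (4 * c)) with (Cmod h) by (field; lra). unfold Rdiv in Hh2. lra. }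
  assert (c * Cmod (Csub (Csub (Cexp h) (1, 0)) h) <= c * (4 * Cmod h ^ 2)) by (apply Rmult_le_compat_l; lra).
  lra.
Qed.

Lemma Cadd_0 z : Cadd z (0,0) = z.
Proof. destruct z; unfold Cadd; simpl; f_equal; ring. Qed.

Lemma inv_deriv (E L : Cplx -> Cplx) z e C rho : 0 < rho -> 0 <= C ->
  (forall h, Cmod h < rho -> E (L (Cadd z h)) = Cadd z h) ->
  (forall h, Cmod h < rho -> Cmod (Csub (L (Cadd z h)) (L z)) <= C * Cmod h) ->
  cderiv_at E (L z) e -> 0 < Cmod e -> cderiv_at L z (Cinv e).
Proof.
  intros Hr HC HE HL Hd He eps Heps.
  set (eps' := eps * Cmod e / (C + 1)).
  assert (He' : 0 < eps') by (unfold eps'; apply Rdiv_lt_0_compat; [nra|lra]).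
  destruct (Hd eps' He') as [dE [HdE HdE2]].
  exists (Rmin rho (dE / (C+1))). split.
  { apply Rmin_pos; [lra|]. apply Rdiv_lt_0_compat; lra. }
  intros h [Hh1 Hh2].
  assert (Hr1 : Cmod h < rho) by (generalize (Rmin_l rho (dE/(C+1))); lra).
  assert (Hr2 : Cmod h < dE/(C+1)) by (generalize (Rmin_r rho (dE/(C+1))); lra).
  set (k := Csub (L (Cadd z h)) (L z)).
  assert (Hk : Cmod k <= C * Cmod h) by (apply HL; lra).
  assert (HkE : Cmod k < dE).
  { apply (Rle_lt_trans _ (C * Cmod h)); [lra|].
    apply (Rle_lt_trans _ ((C+1) * Cmod h)); [nra|].
    apply (Rmult_lt_reg_r (/(C+1))). apply Rinv_0_lt_compat; lra.
    replace ((C + 1) * Cmod h * / (C + 1)) with (Cmod h) by (field; lra). unfold Rdiv in Hr2. lra. }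
  assert (Ez : E (L z) = z).
  { assert (X := HE (0,0)). rewrite !Cadd_0 in X. apply X. rewrite (Cmod_zero_eq_rev) || idtac.
    unfold Cmod; simpl. replace (0*(0*1)+0*(0*1)) with 0 by ring. rewrite sqrt_0. lra. }
  assert (Ezh : E (Cadd (L z) k) = Cadd z h).
  { replace (Cadd (L z) k) with (L (Cadd z h)) by (unfold k; destruct (L (Cadd z h)), (L z); unfold Cadd, Csub; simpl; f_equal; ring).
    apply HE; lra. }
  assert (Main : Cmod (Csub h (Cmul k e)) <= eps' * Cmod k).
  { destruct (Rle_lt_or_eq_dec 0 (Cmod k) (Cmod_nonneg k)) as [Kp|K0].
    - assert (X := HdE2 k (conj Kp HkE)). rewrite Ezh, Ez in X.
      replace (Csub h (Cmul k e)) with (Csub (Csub (Cadd z h) z) (Cmul k e)) by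
        (destruct z, h; unfold Csub, Cadd; simpl; f_equal; ring). exact X.
    - exfalso. symmetry in K0. apply Cmod_zero_eq in K0.
      assert (Cadd z h = z).
      { rewrite <- Ezh. rewrite K0, Cadd_0. exact Ez. }
      assert (h = (0,0)). { destruct z, h. unfold Cadd in H. injection H; intros. f_equal; lra. }
      subst h. unfold Cmod in Hh1; simpl in Hh1. replace (0*(0*1)+0*(0*1)) with 0 in Hh1 by ring.
      rewrite sqrt_0 in Hh1. lra. }
  assert (Ie := Cmul_Cinv e He).
  assert (Eq : Csub k (Cmul h (Cinv e)) =
               Cmul (Cinv e) (Cmul (-1,0) (Csub h (Cmul k e)))).
  { destruct k as [k1 k2], e as [e1 e2], (Cinv (e1,e2)) as [i1 i2] eqn:Hi.
    unfold Cmul in Ie; simpl in Ie. injection Ie; intros I2 I1.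
    destruct h as [h1 h2]. unfold Csub, Cmul; simpl.
    assert (Z1: k1*(e1*i1 - e2*i2) = k1) by (rewrite I1; ring).
    assert (Z2: k2*(e1*i2+e2*i1)=0) by (rewrite I2; ring).
    assert (Z3: k2*(e1*i1 - e2*i2) = k2) by (rewrite I1; ring).
    assert (Z4: k1*(e1*i2+e2*i1)=0) by (rewrite I2; ring).
    f_equal; lra. }
  rewrite Eq, Cmod_mul, Cmod_m1, Cmod_Cinv by lra.
  apply (Rmult_le_reg_l (Cmod e)); [lra|].
  replace (Cmod e * (/ Cmod e * Cmod (Csub h (Cmul k e)))) with (Cmod (Csub h (Cmul k e))) by (field; lra).
  apply (Rle_trans _ _ _ Main). unfold eps'.
  assert (0 <= Cmod h) by apply Cmod_nonneg.
  apply (Rle_trans _ (eps * Cmod e / (C + 1) * (C * Cmod h))).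
  { apply Rmult_le_compat_l; [apply Rlt_le; exact He'|exact Hk]. }
  replace (eps * Cmod e / (C + 1) * (C * Cmod h)) with ((Cmod e * (eps * Cmod h)) * (C/(C+1))) by (field; lra).
  rewrite <- (Rmult_1_r (Cmod e * (eps * Cmod h))) at 2.
  apply Rmult_le_compat_l. { apply Rmult_le_pos; [lra|nra]. }
  apply (Rmult_le_reg_r (C+1)); [lra|]. field_simplify; lra.
Qed.

Lemma Cmod_00 : Cmod (0,0) = 0.
Proof. unfold Cmod; simpl. replace (0*(0*1)+0*(0*1)) with 0 by ring. apply sqrt_0. Qed.

Lemma cderiv_all f z d : cderiv_at f z d -> forall eps, 0 < eps -> exists delta, 0 < delta /\
  forall h, Cmod h < delta -> Cmod (Csub (Csub (f (Cadd z h)) (f z)) (Cmul h d)) <= eps * Cmod h.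
Proof.
  intros H eps He. destruct (H eps He) as [dl [Hd Hd2]]. exists dl. split; auto.
  intros h Hh. destruct (Rle_lt_or_eq_dec 0 (Cmod h) (Cmod_nonneg h)) as [P|Z].
  - apply Hd2; lra.
  - symmetry in Z. rewrite Z. apply Cmod_zero_eq in Z. subst h. rewrite Cadd_0.
    replace (Csub (Csub (f z) (f z)) (Cmul (0, 0) d)) with ((0,0) : Cplx) by
      (destruct (f z), d; unfold Csub, Cmul; simpl; f_equal; ring).
    rewrite Cmod_00. lra.
Qed.

Lemma chain f g z e1 e2 : cderiv_at f z e1 -> cderiv_at g (f z) e2 ->
  cderiv_at (fun x => g (f x)) z (Cmul e1 e2).
Proof.
  intros Hf Hg eps Heps. set (a := Cmod e1). set (b := Cmod e2).
  assert (Ha : 0 <= a) by apply Cmod_nonneg. assert (Hb : 0 <= b) by apply Cmod_nonneg.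
  set (eps2 := eps / (2 * (a+1))). set (eps1 := Rmin 1 (eps / (2 * (b+1)))).
  assert (P2 : 0 < eps2) by (unfold eps2; apply Rdiv_lt_0_compat; lra).
  assert (P1 : 0 < eps1) by (unfold eps1; apply Rmin_pos; [lra|apply Rdiv_lt_0_compat; lra]).
  destruct (cderiv_all f z e1 Hf eps1 P1) as [df [Hdf Hf2]].
  destruct (cderiv_all g (f z) e2 Hg eps2 P2) as [dg [Hdg Hg2]].
  exists (Rmin df (dg / (a+1))). split.
  { apply Rmin_pos; [lra|apply Rdiv_lt_0_compat; lra]. }
  intros h [Hh1 Hh2].
  assert (Hr1 : Cmod h < df) by (generalize (Rmin_l df (dg/(a+1))); lra).
  assert (Hr2 : Cmod h < dg/(a+1)) by (generalize (Rmin_r df (dg/(a+1))); lra).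
  set (k := Csub (f (Cadd z h)) (f z)).
  assert (F := Hf2 h Hr1). fold k in F.
  assert (E1 : eps1 <= 1) by apply Rmin_l.
  assert (E2 : eps1 <= eps / (2 * (b+1))) by apply Rmin_r.
  assert (Hk : Cmod k <= (a+1) * Cmod h).
  { assert (T := Cmod_tri3 k (Cmul h e1) (0,0)).
    replace (Csub k (0,0)) with k in T by (destruct k; unfold Csub; simpl; f_equal; ring).
    replace (Csub (Cmul h e1) (0,0)) with (Cmul h e1) in T by (destruct h, e1; unfold Csub, Cmul; simpl; f_equal; ring).
    rewrite Cmod_mul in T. fold a in T. assert (0 <= Cmod h) by apply Cmod_nonneg. assert (eps1 * Cmod h <= Cmod h) by nra.
    lra. }
  assert (Hk2 : Cmod k < dg).
  { apply (Rle_lt_trans _ _ _ Hk). apply (Rmult_lt_reg_r (/(a+1))). apply Rinv_0_lt_compat; lra.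
    replace ((a + 1) * Cmod h * / (a + 1)) with (Cmod h) by (field; lra). unfold Rdiv in Hr2. lra. }
  assert (G := Hg2 k Hk2).
  replace (Cadd (f z) k) with (f (Cadd z h)) in G by
    (unfold k; destruct (f (Cadd z h)), (f z); unfold Cadd, Csub; simpl; f_equal; ring).
  assert (Eq : Csub (Csub (g (f (Cadd z h))) (g (f z))) (Cmul h (Cmul e1 e2)) =
     Cadd (Csub (Csub (g (f (Cadd z h))) (g (f z))) (Cmul k e2)) (Cmul (Csub k (Cmul h e1)) e2)).
  { destruct (g (f (Cadd z h))), (g (f z)), h, e1, e2, k. unfold Csub, Cadd, Cmul; simpl; f_equal; ring. }
  rewrite Eq. eapply Rle_trans; [apply Cmod_tri|]. rewrite Cmod_mul. fold b.
  assert (H0 : 0 <= Cmod h) by apply Cmod_nonneg.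
  assert (X1 : eps2 * Cmod k <= eps / 2 * Cmod h).
  { apply (Rle_trans _ (eps2 * ((a+1) * Cmod h))). apply Rmult_le_compat_l; lra.
    unfold eps2. right. field. lra. }
  assert (X2 : Cmod (Csub k (Cmul h e1)) * b <= eps / 2 * Cmod h).
  { apply (Rle_trans _ (eps1 * Cmod h * b)). apply Rmult_le_compat_r; lra.
    apply (Rle_trans _ (eps / (2*(b+1)) * Cmod h * b)).
    { apply Rmult_le_compat_r; [lra|]. apply Rmult_le_compat_r; lra. }
    apply (Rle_trans _ (eps / (2*(b+1)) * Cmod h * (b+1))).
    { apply Rmult_le_compat_l; [|lra]. apply Rmult_le_pos; [|lra]. apply Rlt_le, Rdiv_lt_0_compat; lra. }
    right. field. lra. }
  lra.
Qed.

Section Main.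
Variable z0 : Cplx.

Definition zs (k : nat) : Cplx := iter k Cexp z0.

Lemma zs_S k : zs (S k) = Cexp (zs k).
Proof. unfold zs, iter. apply Nat.iter_succ. Qed.

Lemma zs_pos k : (1 <= k)%nat -> 0 < Cmod (zs k).
Proof. intros H. destruct k; [lia|]. rewrite zs_S, Cmod_Cexp. apply exp_pos. Qed.

Definition Lk (k : nat) (w : Cplx) : Cplx := Cadd (zs (pred k)) (Log (Cmul w (Cinv (zs k)))).

Lemma sub_scale a b c : Csub (Cmul a c) (Cmul b c) = Cmul (Csub a b) c.
Proof. destruct a, b, c; unfold Csub, Cmul; simpl; f_equal; ring. Qed.

Lemma Lk_u k w : (1 <= k)%nat -> Cmod (Csub (Cmul w (Cinv (zs k))) (1,0)) = Cmod (Csub w (zs k)) / Cmod (zs k).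
Proof. intros H. assert (P := zs_pos k H). rewrite <- (Cmul_Cinv (zs k)) by lra.
  rewrite sub_scale, Cmod_mul, Cmod_Cinv by lra. unfold Rdiv. reflexivity. Qed.

Lemma Lk_in k w : (1 <= k)%nat -> Cmod (Csub w (zs k)) < 1/40 * Cmod (zs k) ->
  Cmod (Csub (Cmul w (Cinv (zs k))) (1,0)) < 1/40.
Proof. intros H H1. assert (P := zs_pos k H). rewrite Lk_u by auto.
  apply (Rmult_lt_reg_r (Cmod (zs k))); [lra|]. unfold Rdiv. rewrite Rmult_assoc, Rinv_l by lra. lra. Qed.

Lemma Lk_exp k w : (1 <= k)%nat -> Cmod (Csub w (zs k)) < 1/40 * Cmod (zs k) -> Cexp (Lk k w) = w.
Proof.
  intros H H1. assert (P := zs_pos k H). assert (I := Lk_in k w H H1).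
  destruct (Log_small _ I) as [U1 _]. unfold Lk. rewrite Cexp_add, Cexp_Log by auto.
  destruct k; [lia|]. simpl pred. rewrite <- zs_S.
  assert (E := Cmul_Cinv (zs (S k)) P). destruct (zs (S k)) as [a b], (Cinv (a,b)) as [c d], w as [x y].
  unfold Cmul in *; simpl in *. injection E; intros E2 E1.
  assert (Z1 : x*(a*c - b*d) = x) by (rewrite E1; ring). assert (Z2 : y*(a*d + b*c) = 0) by (rewrite E2; ring).
  assert (Z3 : y*(a*c - b*d) = y) by (rewrite E1; ring). assert (Z4 : x*(a*d + b*c) = 0) by (rewrite E2; ring).
  f_equal; lra.
Qed.

Lemma Lk_lip k w : (1 <= k)%nat -> Cmod (Csub w (zs k)) < 1/40 * Cmod (zs k) ->
  Cmod (Csub (Lk k w) (zs (pred k))) <= 2 * Cmod (Csub w (zs k)) / Cmod (zs k).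
Proof.
  intros H H1. assert (P := zs_pos k H). assert (I := Lk_in k w H H1).
  assert (I1 : Cmod (Csub (1,0) (1,0)) < 1/40).
  { replace (Csub (1,0) (1,0)) with ((0,0) : Cplx) by (unfold Csub; simpl; f_equal; ring). rewrite Cmod_00; lra. }
  assert (X := Log_lip _ _ I I1). rewrite Log_1, Cmod_10 in X.
  replace (Csub (Lk k w) (zs (pred k))) with (Csub (Log (Cmul w (Cinv (zs k)))) (0,0)).
  - eapply Rle_trans; [exact X|]. rewrite Lk_u by auto. right; field. lra.
  - unfold Lk. destruct (zs (pred k)), (Log (Cmul w (Cinv (zs k)))). unfold Csub, Cadd; simpl; f_equal; ring.
Qed.

Lemma Lk_deriv k w : (1 <= k)%nat -> Cmod (Csub w (zs k)) < 1/40 * Cmod (zs k) ->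
  cderiv_at (Lk k) w (Cinv w).
Proof.
  intros H H1. assert (P := zs_pos k H).
  assert (Wp : 0 < Cmod w).
  { generalize (Cmod_rev (zs k) w). rewrite Cmod_sub_sym. lra. }
  set (rho := 1/40 * Cmod (zs k) - Cmod (Csub w (zs k))).
  assert (Hin : forall h, Cmod h < rho -> Cmod (Csub (Cadd w h) (zs k)) < 1/40 * Cmod (zs k)).
  { intros h Hh. replace (Csub (Cadd w h) (zs k)) with (Cadd (Csub w (zs k)) h) by
      (destruct w, h, (zs k); unfold Csub, Cadd; simpl; f_equal; ring).
    generalize (Cmod_tri (Csub w (zs k)) h). unfold rho in Hh. lra. }
  assert (D := Cexp_deriv (Lk k w)). rewrite (Lk_exp k w H H1) in D.
  apply (inv_deriv Cexp (Lk k) w w (2 / Cmod w) rho).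
  - unfold rho; lra.
  - apply Rlt_le, Rdiv_lt_0_compat; lra.
  - intros h Hh. apply Lk_exp; auto.
  - intros h Hh. assert (I1 := Lk_in k _ H (Hin h Hh)). assert (I2 := Lk_in k _ H H1).
    assert (X := Log_lip _ _ I1 I2).
    replace (Csub (Lk k (Cadd w h)) (Lk k w)) with
      (Csub (Log (Cmul (Cadd w h) (Cinv (zs k)))) (Log (Cmul w (Cinv (zs k))))) by
      (unfold Lk; destruct (zs (pred k)), (Log (Cmul (Cadd w h) (Cinv (zs k)))), (Log (Cmul w (Cinv (zs k))));
       unfold Csub, Cadd; simpl; f_equal; ring).
    eapply Rle_trans; [exact X|].
    rewrite sub_scale, !Cmod_mul, Cmod_Cinv by lra.
    replace (Csub (Cadd w h) w) with h by (destruct w, h; unfold Csub, Cadd; simpl; f_equal; ring).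
    right. field. split; lra.
  - exact D.
  - exact Wp.
Qed.

Fixpoint P (n i : nat) (w : Cplx) {struct i} : Cplx :=
  match i with 0 => w | S i' => Lk (n - i') (P n i' w) end.
Fixpoint Dv (n i : nat) (w : Cplx) {struct i} : Cplx :=
  match i with 0 => (1,0) | S i' => Cmul (Dv n i' w) (Cinv (P n i' w)) end.
Definition cs (k : nat) : R := 2 / Cmod (zs k).
Fixpoint G (a d : nat) : R := match d with 0 => 1 | S d' => cs (S a) * G (S a) d' end.

Definition Good (n : nat) : Prop :=
  forall i, (i < n)%nat -> 2 * PI * G (n - i) i <= 1/40 * Cmod (zs (n - i)).

Lemma cderiv_id z : cderiv_at (fun w => w) z (1,0).
Proof. intros eps He. exists 1. split; [lra|]. intros h Hh.
  replace (Csub (Csub (Cadd z h) z) (Cmul h (1, 0))) with ((0,0):Cplx) by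
    (destruct z, h; unfold Csub, Cadd, Cmul; simpl; f_equal; ring).
  rewrite Cmod_00. apply Rmult_le_pos; [lra|apply Cmod_nonneg]. Qed.

Lemma P_center n i : (i <= n)%nat -> P n i (zs n) = zs (n - i).
Proof.
  induction i; intros Hi; simpl. { f_equal; lia. }
  rewrite IHi by lia. unfold Lk. rewrite Cmul_Cinv by (apply zs_pos; lia). rewrite Log_1, Cadd_0.
  f_equal. lia.
Qed.

Lemma chainP n : Good n -> forall w, Cmod (Csub w (zs n)) < 2 * PI -> forall i, (i <= n)%nat ->
  (Cmod (Csub (P n i w) (zs (n - i)%nat)) < 2 * PI * G (n - i)%nat i) /\
  (cderiv_at (P n i) w (Dv n i w)) /\ (Cmod (Dv n i w) <= G (n - i)%nat i) /\
  (iter i Cexp (P n i w) = w).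
Proof.
  intros HG w Hw. induction i; intros Hi.
  - simpl. rewrite Nat.sub_0_r. split; [lra|]. split; [apply cderiv_id|]. split; [rewrite Cmod_10; lra|reflexivity].
  - destruct (IHi ltac:(lia)) as [A1 [A2 [A3 A4]]].
    set (k := (n - i)%nat) in *.
    assert (Hk : (1 <= k)%nat) by (unfold k; lia).
    assert (Hnk : (n - S i)%nat = pred k) by (unfold k; lia).
    assert (Pk := zs_pos k Hk).
    assert (Gd : G (n - S i) (S i) = cs k * G k i).
    { rewrite Hnk. simpl. replace (S (pred k)) with k by lia. reflexivity. }
    assert (HG1 := HG i ltac:(lia)). fold k in HG1.
    assert (In : Cmod (Csub (P n i w) (zs k)) < 1/40 * Cmod (zs k)) by lra.
    assert (Gnn : 0 <= G k i).
    { generalize (Cmod_nonneg (Csub (P n i w) (zs k))). intros; generalize PI_RGT_0; nra. }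
    assert (Pp : (1 - 1/40) * Cmod (zs k) <= Cmod (P n i w)).
    { generalize (Cmod_rev (zs k) (P n i w)). rewrite Cmod_sub_sym. lra. }
    split; [|split; [|split]].
    + cbn [P]. fold k. rewrite Gd, Hnk.
      eapply Rle_lt_trans; [apply Lk_lip; auto|].
      unfold cs. apply (Rmult_lt_reg_r (Cmod (zs k))); [lra|].
      replace (2 * Cmod (Csub (P n i w) (zs k)) / Cmod (zs k) * Cmod (zs k)) with (2 * Cmod (Csub (P n i w) (zs k))) by (field; lra).
      replace (2 * PI * (2 / Cmod (zs k) * G k i) * Cmod (zs k)) with (2 * (2 * PI * G k i)) by (field; lra).
      lra.
    + simpl. fold k. exact (chain (P n i) (Lk k) w (Dv n i w) (Cinv (P n i w)) A2 (Lk_deriv k _ Hk In)).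
    + cbn [Dv]. rewrite Gd, Cmod_mul, Cmod_Cinv by lra. unfold cs.
      rewrite Rmult_comm. apply Rmult_le_compat; try lra.
      * apply Rlt_le, Rinv_0_lt_compat; lra.
      * apply Cmod_nonneg.
      * apply (Rmult_le_reg_r (Cmod (P n i w))); [lra|]. rewrite Rinv_l by lra.
        apply (Rmult_le_reg_r (Cmod (zs k))); [lra|]. field_simplify; lra.
    + unfold iter in *. rewrite Nat.iter_succ_r. simpl P. fold k. rewrite Lk_exp; auto.
Qed.

Lemma cs_pos k : (1 <= k)%nat -> 0 < cs k.
Proof. intros H. unfold cs. apply Rdiv_lt_0_compat; [lra|apply zs_pos; auto]. Qed.

Lemma G_nonneg a d : 0 <= G a d.
Proof. revert a; induction d; intros a; simpl; [lra|].
  apply Rmult_le_pos; [apply Rlt_le, cs_pos; lia|apply IHd]. Qed.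

Lemma G_split a d1 d2 : G a (d1 + d2) = G a d1 * G (a + d1) d2.
Proof. revert a; induction d1; intros a; simpl.
  - rewrite Nat.add_0_r. ring.
  - rewrite IHd1. rewrite Nat.add_succ_r. simpl. ring. Qed.

Lemma G_half a d : (forall j, (a < j)%nat -> cs j <= 1/2) -> G a d <= (1/2)^d.
Proof. revert a; induction d; intros a H; simpl; [lra|].
  apply Rmult_le_compat; [apply Rlt_le, cs_pos; lia|apply G_nonneg|apply H; lia|].
  apply IHd. intros j Hj; apply H; lia. Qed.
End Main.

Fixpoint fmax (f : nat -> R) (j : nat) : R :=
  match j with 0 => f 0%nat | S j' => Rmax (fmax f j') (f (S j')) end.
Lemma fmax_ge f j k : (k <= j)%nat -> f k <= fmax f j.
Proof. induction j; intros H; simpl.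
  - replace k with 0%nat by lia. lra.
  - destruct (Nat.eq_dec k (S j)) as [->|Hn]; [apply Rmax_r|].
    eapply Rle_trans; [apply IHj; lia|apply Rmax_l]. Qed.
Fixpoint fmin (f : nat -> R) (j : nat) : R :=
  match j with 0 => f 0%nat | S j' => Rmin (fmin f j') (f (S j')) end.
Lemma fmin_le f j k : (k <= j)%nat -> fmin f j <= f k.
Proof. induction j; intros H; simpl.
  - replace k with 0%nat by lia. lra.
  - destruct (Nat.eq_dec k (S j)) as [->|Hn]; [apply Rmin_r|].
    eapply Rle_trans; [apply Rmin_l|apply IHj; lia]. Qed.
Lemma fmin_pos f j : (forall k, (k <= j)%nat -> 0 < f k) -> 0 < fmin f j.
Proof. induction j; intros H; simpl; [apply H; lia|].
  apply Rmin_pos; [apply IHj; intros; apply H; lia|apply H; lia]. Qed.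

Theorem mainTheorem10 (z0 : Cplx) (Hesc : escapes Cexp z0) :
  exists (n0 : nat) (phi : nat -> Cplx -> Cplx) (dphi : nat -> Cplx -> Cplx),
    (* phi n is holomorphic on D_n with derivative dphi n *)
    (forall n, (n0 <= n)%nat -> forall z, in_disc (2 * PI) (iter n Cexp z0) z ->
        cderiv_at (phi n) z (dphi n z)) /\
    (* (a) *)
    (forall n, (n0 <= n)%nat -> phi n (iter n Cexp z0) = z0) /\
    (* (b) *)
    (forall n, (n0 <= n)%nat -> forall z, in_disc (2 * PI) (iter n Cexp z0) z ->
        iter n Cexp (phi n z) = z) /\
    (* (c) sup_{D_n} |phi_n'| -> 0 *)
    (forall eps, 0 < eps -> exists N, forall n, (N <= n)%nat -> (n0 <= n)%nat ->
        forall z, in_disc (2 * PI) (iter n Cexp z0) z -> Cmod (dphi n z) <= eps) /\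
    (* (d) diam(phi_n(D_n)) -> 0 *)
    (forall eps, 0 < eps -> exists N, forall n, (N <= n)%nat -> (n0 <= n)%nat ->
        forall z w, in_disc (2 * PI) (iter n Cexp z0) z ->
          in_disc (2 * PI) (iter n Cexp z0) w ->
          Cmod (Csub (phi n z) (phi n w)) <= eps).
Proof.
  assert (PIp := PI_RGT_0). assert (PI3 : 3 < PI) by (generalize PI2_3_2; lra).
  destruct (Hesc (80 * PI + 8)) as [m0 Hm0].
  set (m := S m0).
  assert (Hbig : forall j, (m <= j)%nat -> 80 * PI + 8 < Cmod (zs z0 j)).
  { intros j Hj. apply Hm0. unfold m in Hj; lia. }
  assert (Hcs : forall j, (m < j)%nat -> cs z0 j <= 1/2).
  { intros j Hj. assert (X := Hbig j ltac:(lia)). unfold cs.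
    apply (Rmult_le_reg_r (Cmod (zs z0 j))); [lra|]. field_simplify; lra. }
  set (H := fmax (fun k => G z0 k (m - k)) m).
  assert (H0 : 0 <= H). { eapply Rle_trans; [apply (G_nonneg z0 0 m)|]. apply (fmax_ge (fun k => G z0 k (m - k)) m 0). lia. }
  set (eta := fmin (fun k => Cmod (zs z0 (S k))) m).
  assert (Heta : 0 < eta) by (apply fmin_pos; intros; apply zs_pos; lia).
  assert (Heta2 : forall k, (1 <= k <= S m)%nat -> eta <= Cmod (zs z0 k)).
  { intros k Hk. replace k with (S (pred k)) by lia. apply (fmin_le (fun k => Cmod (zs z0 (S k)))). lia. }
  assert (BndB : forall n k, (m <= n)%nat -> (k <= m)%nat -> G z0 k (n - k) <= H * (1/2)^(n - m)).
  { intros n k Hn Hk. replace (n - k)%nat with ((m - k) + (n - m))%nat by lia.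
    rewrite G_split. replace (k + (m - k))%nat with m by lia.
    apply Rmult_le_compat; try apply G_nonneg.
    - apply (fmax_ge (fun k => G z0 k (m - k)) m k Hk).
    - apply G_half. auto. }
  assert (BndC : forall n k, (m <= k)%nat -> G z0 k (n - k) <= 1).
  { intros n k Hk. eapply Rle_trans; [apply G_half; intros; apply Hcs; lia|].
    apply pow_le1 || (induction (n-k)%nat; simpl; lra). }
  assert (Hy : 0 < eta / (80 * PI * (H + 1))) by (apply Rdiv_lt_0_compat; [lra|nra]).
  destruct (pow_lt_1_zero (1/2) ltac:(rewrite Rabs_right; lra) _ Hy) as [N1 HN1].
  set (n0 := (m + N1)%nat).
  assert (Hgood : forall n, (n0 <= n)%nat -> Good z0 n).
  { intros n Hn i Hi. set (k := (n - i)%nat).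
    destruct (Compare_dec.le_lt_dec m k) as [Hk|Hk].
    - assert (X := BndC (k + i)%nat k Hk). replace (k + i - k)%nat with i in X by lia.
      assert (Y := Hbig k Hk). generalize (G_nonneg z0 k i). fold k. nra.
    - assert (X := BndB n k ltac:(unfold n0 in Hn; lia) ltac:(lia)).
      replace (n - k)%nat with i in X by (unfold k; lia).
      assert (Y := HN1 (n - m)%nat ltac:(unfold n0 in Hn; lia)).
      rewrite Rabs_right in Y by (apply Rle_ge, pow_le; lra).
      assert (Z := Heta2 k ltac:(unfold k; lia)).
      assert (W : H * (1/2)^(n-m) <= (H+1) * (eta / (80 * PI * (H + 1)))).
      { apply Rmult_le_compat; try lra. apply pow_le; lra. }
      replace ((H+1) * (eta / (80 * PI * (H + 1)))) with (eta / (80 * PI)) in W by (field; lra).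
      fold k.
      apply (Rle_trans _ (2 * PI * (eta / (80 * PI)))).
      { apply Rmult_le_compat_l; lra. }
      replace (2 * PI * (eta / (80 * PI))) with (1/40 * eta) by (field; lra). lra. }
  exists n0, (fun n => P z0 n n), (fun n => Dv z0 n n).
  split; [|split; [|split; [|split]]].
  - intros n Hn z Hz. exact (proj1 (proj2 (chainP z0 n (Hgood n Hn) z Hz n (le_n n)))).
  - intros n Hn. simpl. unfold iter at 1. fold (zs z0 n).
    rewrite P_center by lia. rewrite Nat.sub_diag. reflexivity.
  - intros n Hn z Hz. exact (proj2 (proj2 (proj2 (chainP z0 n (Hgood n Hn) z Hz n (le_n n))))).
  - intros eps He.
    assert (Hy2 : 0 < eps / (4 * PI * (H + 1))) by (apply Rdiv_lt_0_compat; [lra|nra]).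
    destruct (pow_lt_1_zero (1/2) ltac:(rewrite Rabs_right; lra) _ Hy2) as [N2 HN2].
    exists (m + N2)%nat. intros n Hn Hn0 z Hz.
    destruct (chainP z0 n (Hgood n Hn0) z Hz n (le_n n)) as [_ [_ [A _]]].
    rewrite Nat.sub_diag in A.
    assert (X := BndB n 0%nat ltac:(lia) ltac:(lia)). rewrite Nat.sub_0_r in X.
    assert (Y := HN2 (n - m)%nat ltac:(lia)).
    rewrite Rabs_right in Y by (apply Rle_ge, pow_le; lra).
    assert (W : H * (1/2)^(n-m) <= (H+1) * (eps / (4 * PI * (H + 1)))).
    { apply Rmult_le_compat; try lra. apply pow_le; lra. }
    replace ((H+1) * (eps / (4 * PI * (H + 1)))) with (eps / (4 * PI)) in W by (field; lra).
    assert (eps / (4 * PI) <= eps).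
    { apply (Rmult_le_reg_r (4*PI)); [lra|]. field_simplify; nra. }
    simpl. lra.
  - intros eps He.
    assert (Hy2 : 0 < eps / (4 * PI * (H + 1))) by (apply Rdiv_lt_0_compat; [lra|nra]).
    destruct (pow_lt_1_zero (1/2) ltac:(rewrite Rabs_right; lra) _ Hy2) as [N2 HN2].
    exists (m + N2)%nat. intros n Hn Hn0 z w Hz Hw.
    destruct (chainP z0 n (Hgood n Hn0) z Hz n (le_n n)) as [A _].
    destruct (chainP z0 n (Hgood n Hn0) w Hw n (le_n n)) as [B _].
    rewrite Nat.sub_diag in A, B.
    assert (X := BndB n 0%nat ltac:(lia) ltac:(lia)). rewrite Nat.sub_0_r in X.
    assert (Y := HN2 (n - m)%nat ltac:(lia)).
    rewrite Rabs_right in Y by (apply Rle_ge, pow_le; lra).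
    assert (W : H * (1/2)^(n-m) <= (H+1) * (eps / (4 * PI * (H + 1)))).
    { apply Rmult_le_compat; try lra. apply pow_le; lra. }
    replace ((H+1) * (eps / (4 * PI * (H + 1)))) with (eps / (4 * PI)) in W by (field; lra).
    assert (T := Cmod_tri3 (P z0 n n z) (zs z0 0%nat) (P z0 n n w)).
    rewrite (Cmod_sub_sym (zs z0 0%nat)) in T.
    assert (2 * PI * G z0 0 n <= 2 * PI * (eps / (4 * PI))) by (apply Rmult_le_compat_l; lra).
    replace (2 * PI * (eps / (4 * PI))) with (eps / 2) in H1 by (field; lra).
    simpl. lra.
Qed.
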